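(* Let $p\ge 1$ and $\chi\in\mathcal W^+_p$. Then there exist numbers $p_k\ge 1$ (possibly unbounded in $k$) and weights $\chi_k\in\mathcal W^+_{p_k}\cap C^\infty(\mathbb R)$, $k\in\mathbb N$, such that $\chi_k\to\chi$ uniformly on compact subsets of $\mathbb R$.
   Context: A normalized Young weight is a function $\chi:\mathbb R\to[0,\infty]$ that is convex, even, lower semicontinuous, with $\chi(0)=0$ and $1\in\partial\chi(1)$ (here $\partial\chi(l)$ is the set of subgradients of $\chi$ at $l$). For $q\ge1$, $\mathcal W^+_q$ denotes the set of finite-valued normalized Young weights satisfying $l\,\chi'(l)\le q\,\chi(l)$ for all $l>0$ and every subgradient $\chi'(l)\in\partial\chi(l)$. *)

(* Defs.v *)
From Stdlib Require Import Reals Lra.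
From Coquelicot Require Import Coquelicot.
Open Scope R_scope.

Definition is_subgradient (f : R -> R) (l s : R) : Prop :=
  forall y, f l + s * (y - l) <= f y.

Definition convex_fun (f : R -> R) : Prop :=
  forall x y t, 0 <= t <= 1 ->
    f (t * x + (1 - t) * y) <= t * f x + (1 - t) * f y.

Definition even_fun (f : R -> R) : Prop := forall x, f (- x) = f x.

Definition lsc (f : R -> R) : Prop :=
  forall x eps, 0 < eps -> exists delta, 0 < delta /\
    forall y, Rabs (y - x) < delta -> f x - eps < f y.

(* finite-valued normalized Young weight: chi : R -> [0,oo) *)
Definition normalized_young_weight (chi : R -> R) : Prop :=
  (forall x, 0 <= chi x) /\ convex_fun chi /\ even_fun chi /\ lsc chi /\
  chi 0 = 0 /\ is_subgradient chi 1 1.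

Definition W_plus (q : R) (chi : R -> R) : Prop :=
  normalized_young_weight chi /\
  forall l s, 0 < l -> is_subgradient chi l s -> l * s <= q * chi l.

Definition smooth (f : R -> R) : Prop := forall n x, ex_derive_n f n x.

(* uniform convergence on compact subsets of R (every compact set lies in some [a,b]) *)
Definition cvg_unif_compact (fk : nat -> R -> R) (f : R -> R) : Prop :=
  forall a b eps, 0 < eps -> exists N : nat, forall k, (N <= k)%nat ->
    forall x, a <= x <= b -> Rabs (fk k x - f x) < eps.

(* Main.v *)
Require Import Defs.
From Stdlib Require Import Reals.
From Coquelicot Require Import Coquelicot.
From Stdlib Require Import Lra Lia ZArith ClassicalEpsilon.
Open Scope R_scope.

Fixpoint Cn (n : nat) (f : R -> R) : Prop :=
  match n with
  | O => True
  | S m => (forall x, ex_derive f x) /\ Cn m (Derive f)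
  end.

Lemma Derive_n_S k f x : Derive_n f (S k) x = Derive_n (Derive f) k x.
Proof.
  revert x; induction k; intro x; [reflexivity|].
  change (Derive (Derive_n f (S k)) x = Derive (Derive_n (Derive f) k) x).
  apply Derive_ext; intro; apply IHk.
Qed.

Lemma Cn_ex n : forall f, Cn n f -> forall k x, (k <= n)%nat -> ex_derive_n f k x.
Proof.
  induction n; intros f H k x Hk.
  - destruct k; [exact I| lia].
  - destruct H as [H1 H2]. destruct k; [exact I|].
    destruct k; [exact (H1 x)|].
    change (ex_derive (Derive_n f (S k)) x).
    apply ex_derive_ext with (f := Derive_n (Derive f) k).
    { intro; symmetry; apply Derive_n_S. }
    apply (IHn (Derive f) H2 (S k) x). lia.
Qed.

Lemma Cn_smooth f : (forall n, Cn n f) -> smooth f.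
Proof. intros H n x. apply (Cn_ex n f (H n) n x). lia. Qed.

Lemma Cn_ext n : forall f g, (forall x, f x = g x) -> Cn n f -> Cn n g.
Proof.
  induction n; intros f g E H; [exact I|].
  destruct H as [H1 H2]; split.
  - intro x; apply ex_derive_ext with f; auto.
  - apply IHn with (Derive f); auto. intro; apply Derive_ext; auto.
Qed.

Lemma Cn_down n : forall f, Cn (S n) f -> Cn n f.
Proof.
  induction n; intros f H; [exact I|].
  destruct H as [H1 H2]; split; auto.
Qed.

Lemma Cn_const n c : Cn n (fun _ => c).
Proof.
  revert c; induction n; intro c; [exact I|]. split.
  - intro; apply ex_derive_const.
  - apply Cn_ext with (fun _ => 0); [intro; symmetry; apply Derive_const| apply IHn].
Qed.

Lemma Cn_id n : Cn n (fun x => x).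
Proof.
  destruct n; [exact I|]. split.
  - intro; apply ex_derive_id.
  - apply Cn_ext with (fun _ => 1); [intro; symmetry; apply Derive_id| apply Cn_const].
Qed.

Lemma Cn_plus n : forall f g, Cn n f -> Cn n g -> Cn n (fun x => f x + g x).
Proof.
  induction n; intros f g Hf Hg; [exact I|].
  destruct Hf as [F1 F2]; destruct Hg as [G1 G2]; split.
  - intro x; apply (ex_derive_plus f g x); auto.
  - apply Cn_ext with (fun x => Derive f x + Derive g x).
    + intro; symmetry; apply Derive_plus; auto.
    + apply IHn; auto.
Qed.

Lemma Cn_mult n : forall f g, Cn n f -> Cn n g -> Cn n (fun x => f x * g x).
Proof.
  induction n; intros f g Hf Hg; [exact I|].
  pose proof (Cn_down _ _ Hf) as Hf'. pose proof (Cn_down _ _ Hg) as Hg'.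
  destruct Hf as [F1 F2]; destruct Hg as [G1 G2]; split.
  - intro x; apply (ex_derive_mult f g x); auto.
  - apply Cn_ext with (fun x => Derive f x * g x + f x * Derive g x).
    + intro; symmetry; apply Derive_mult; auto.
    + apply Cn_plus; apply IHn; auto.
Qed.

Lemma Cn_inv n : forall g, (forall x, g x <> 0) -> Cn n g -> Cn n (fun x => / g x).
Proof.
  induction n; intros g Hne Hg; [exact I|].
  pose proof (Cn_down _ _ Hg) as Hg'.
  destruct Hg as [G1 G2]; split.
  - intro; apply ex_derive_inv; auto.
  - apply Cn_ext with (fun x => (-1 * Derive g x) * (/ g x * / g x)).
    + intro x; rewrite Derive_inv; auto. field. auto.
    + apply Cn_mult. apply Cn_mult; auto. apply Cn_const.
      apply Cn_mult; apply IHn; auto.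
Qed.

Lemma Cn_sqrt n : forall g, (forall x, 0 < g x) -> Cn n g -> Cn n (fun x => sqrt (g x)).
Proof.
  induction n; intros g Hp Hg; [exact I|].
  pose proof (Cn_down _ _ Hg) as Hg'.
  destruct Hg as [G1 G2]; split.
  - intro x. eexists. apply is_derive_sqrt; auto. apply Derive_correct; auto.
  - apply Cn_ext with (fun x => Derive g x * / (2 * sqrt (g x))).
    + intro x. symmetry. apply is_derive_unique. apply is_derive_sqrt; auto.
      apply Derive_correct; auto.
    + apply Cn_mult; auto. apply Cn_inv.
      * intro x. generalize (sqrt_lt_R0 _ (Hp x)). lra.
      * apply Cn_mult. apply Cn_const. apply IHn; auto.
Qed.
Lemma convex_plus f g : convex_fun f -> convex_fun g -> convex_fun (fun x => f x + g x).
Proof. intros Hf Hg x y t Ht. generalize (Hf x y t Ht) (Hg x y t Ht). lra. Qed.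

Lemma convex_scal c f : 0 <= c -> convex_fun f -> convex_fun (fun x => c * f x).
Proof. intros Hc Hf x y t Ht. generalize (Hf x y t Ht). intro H.
  apply Rmult_le_compat_l with (r := c) in H; auto. nra. Qed.

Lemma convex_cst c f : convex_fun f -> convex_fun (fun x => f x + c).
Proof. intros Hf x y t Ht. generalize (Hf x y t Ht). lra. Qed.

Lemma convex_lin f a b : convex_fun f -> convex_fun (fun x => f (a * x + b)).
Proof. intros Hf x y t Ht.
  replace (a * (t * x + (1 - t) * y) + b) with (t * (a*x+b) + (1-t)*(a*y+b)) by ring.
  apply Hf; auto. Qed.

Lemma convex_sq : convex_fun (fun x => x * x).
Proof. intros x y t Ht. assert (0 <= t*(1-t)) by nra.
  assert (0 <= t*(1-t)*((x-y)*(x-y))) by (apply Rmult_le_pos; [lra| apply Rle_0_sqr]).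
  replace (t * (x * x) + (1 - t) * (y * y)) with ((t * x + (1 - t) * y) * (t * x + (1 - t) * y) + t*(1-t)*((x-y)*(x-y))) by ring. lra. Qed.

Lemma convex_ext f g : (forall x, f x = g x) -> convex_fun f -> convex_fun g.
Proof. intros E Hf x y t Ht. rewrite <- !E. apply Hf; auto. Qed.

Lemma convex_ge0 f : convex_fun f -> even_fun f -> forall x, f 0 <= f x.
Proof. intros Hc He x. generalize (Hc x (-x) (/2) ltac:(lra)).
  replace (/2 * x + (1 - /2) * - x) with 0 by field. rewrite He. lra. Qed.

Lemma convex_support f x d : convex_fun f -> is_derive f x d ->
  forall y, f x + d * (y - x) <= f y.
Proof.
  intros Hc Hd y. apply Rnot_lt_le; intro Hlt.
  destruct (Req_dec y x) as [->|Hyx]; [lra|].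
  set (gap := f x + d * (y - x) - f y).
  assert (Hg : 0 < gap) by (unfold gap; lra).
  assert (Ha : 0 < Rabs (y - x)) by (apply Rabs_pos_lt; lra).
  apply is_derive_Reals in Hd.
  destruct (Hd (gap / (2 * Rabs (y - x)))) as [[del Hdel] Hdl].
  { apply Rdiv_lt_0_compat; lra. }
  set (t := Rmin 1 (del / (2 * Rabs (y - x)))).
  assert (Ht0 : 0 < t).
  { unfold t; apply Rmin_pos; [lra|]. apply Rdiv_lt_0_compat; lra. }
  assert (Ht1 : t <= 1) by apply Rmin_l.
  assert (Ht2 : t <= del / (2 * Rabs (y - x))) by apply Rmin_r.
  assert (Hh : t * (y - x) <> 0) by (apply Rmult_integral_contrapositive; lra).
  assert (Hhd : Rabs (t * (y - x)) < del).
  { rewrite Rabs_mult, (Rabs_right t) by lra.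
    apply Rle_lt_trans with (del / (2 * Rabs (y - x)) * Rabs (y - x)).
    apply Rmult_le_compat_r; lra. field_simplify; lra. }
  specialize (Hdl _ Hh Hhd). simpl in Hdl.
  generalize (Hc y x t (conj (Rlt_le _ _ Ht0) Ht1)). intro Hcv.
  replace (t * y + (1 - t) * x) with (x + t * (y - x)) in Hcv by ring.
  set (q := (f (x + t * (y - x)) - f x) / (t * (y - x))) in Hdl.
  assert (Hq : f (x + t * (y - x)) - f x = q * (t * (y - x))) by (unfold q; unfold Rdiv; rewrite Rmult_assoc, Rinv_l; [ring| exact Hh]).
  assert (Hb : Rabs ((q - d) * (t * (y - x))) < gap / 2 * t).
  { rewrite Rabs_mult, Rabs_mult, (Rabs_right t) by lra.
    apply Rlt_le_trans with (gap / (2 * Rabs (y - x)) * (t * Rabs (y - x))).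
    apply Rmult_lt_compat_r. nra. lra. right; field; lra. }
  apply Rabs_def2 in Hb. destruct Hb as [Hb1 Hb2].
  assert (f (x + t * (y - x)) - f x <= t * (f y - f x)) by lra.
  assert (t * (d * (y - x)) - gap/2 * t < t * (f y - f x)) by nra.
  unfold gap in *. nra.
Qed.

Lemma subgrad_le_derive f l s d : is_subgradient f l s -> is_derive f l d -> s <= d.
Proof.
  intros Hs Hd. apply Rnot_lt_le; intro Hlt.
  apply is_derive_Reals in Hd.
  destruct (Hd (s - d)) as [[del Hdel] Hdl]; [lra|].
  assert (Hh : del / 2 <> 0) by lra.
  assert (Hhd : Rabs (del / 2) < del) by (rewrite Rabs_right; lra).
  specialize (Hdl _ Hh Hhd). simpl in Hdl.
  generalize (Hs (l + del / 2)). intro H.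
  assert (s <= (f (l + del / 2) - f l) / (del / 2)).
  { apply (Rmult_le_reg_r (del/2)); [lra|]. field_simplify; lra. }
  apply Rabs_def2 in Hdl. lra.
Qed.

Lemma derive_lsc f : (forall x, ex_derive f x) -> lsc f.
Proof.
  intros Hd x eps He.
  assert (Hc : continuity_pt f x).
  { apply continuity_pt_filterlim. exact (ex_derive_continuous (K := R_AbsRing) (V := R_NormedModule) f x (Hd x)). }
  destruct (Hc eps He) as [del [Hdel H]].
  exists del; split; auto. intros y Hy.
  destruct (Req_dec y x) as [->|Hne]; [lra|].
  assert (R_dist (f y) (f x) < eps).
  { apply H. split. split; [exact I| auto]. exact Hy. }
  unfold R_dist in *. apply Rabs_def2 in H0. lra.
Qed.
Definition psi (e x : R) := sqrt (x * x + e * e).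
Definition dpsi (e x : R) := x / psi e x.
Definition ddpsi (e x : R) := e * e / (psi e x * (x * x + e * e)).

Section Psi.
Variable e : R.
Hypothesis He : 0 < e.

Lemma psi_arg_pos x : 0 < x * x + e * e.
Proof. nra. Qed.

Lemma psi_pos x : 0 < psi e x.
Proof. apply sqrt_lt_R0, psi_arg_pos. Qed.

Lemma psi_sq x : psi e x * psi e x = x * x + e * e.
Proof. apply sqrt_sqrt. generalize (psi_arg_pos x); lra. Qed.

Lemma psi_even x : psi e (- x) = psi e x.
Proof. unfold psi; f_equal; ring. Qed.

Lemma psi_abs x : Rabs x <= psi e x <= Rabs x + e.
Proof.
  generalize (psi_pos x) (psi_sq x) (Rabs_pos x). intros H1 H2 H3.
  assert (Hx : Rabs x * Rabs x = x * x) by (rewrite <- Rabs_mult; apply Rabs_right; nra).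
  split; nra.
Qed.

Lemma psi_convex : convex_fun (psi e).
Proof.
  intros x y t Ht.
  set (z := t * x + (1 - t) * y).
  generalize (psi_pos x) (psi_sq x) (psi_pos y) (psi_sq y) (psi_pos z) (psi_sq z).
  set (s := psi e x); set (r := psi e y); set (w := psi e z). intros.
  assert (Hsr : x * y + e * e <= s * r).
  { assert ((x*y + e*e) * (x*y+e*e) <= (s*r)*(s*r)).
    { replace ((s*r)*(s*r)) with ((s*s)*(r*r)) by ring. rewrite H0, H2.
      assert (0 <= (x*e - y*e)*(x*e-y*e)) by apply Rle_0_sqr. nra. }
    assert (0 < s * r) by (apply Rmult_lt_0_compat; auto).
    destruct (Rle_or_lt (x*y+e*e) (s*r)) as [|Hc]; auto.
    assert ((s*r)*(s*r) < (x*y+e*e)*(x*y+e*e)) by (apply Rmult_le_0_lt_compat; lra). lra. }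
  assert (0 <= t * (1 - t)) by nra.
  assert (w * w <= (t * s + (1 - t) * r) * (t * s + (1 - t) * r)).
  { rewrite H4. unfold z.
    replace ((t * s + (1 - t) * r) * (t * s + (1 - t) * r)) with
      (t*t*(s*s) + (1-t)*(1-t)*(r*r) + 2*(t*(1-t))*(s*r)) by ring.
    rewrite H0, H2. nra. }
  assert (0 <= t * s + (1 - t) * r) by nra.
  destruct (Rle_or_lt w (t * s + (1 - t) * r)) as [|Hc]; auto.
  assert ((t * s + (1 - t) * r) * (t * s + (1 - t) * r) < w * w) by (apply Rmult_le_0_lt_compat; lra). lra.
Qed.

Lemma psi_derive x : is_derive (psi e) x (dpsi e x).
Proof.
  unfold psi, dpsi. auto_derive. apply psi_arg_pos.
  unfold psi. field. generalize (psi_pos x); unfold psi; lra.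
Qed.

Lemma dpsi_derive x : is_derive (dpsi e) x (ddpsi e x).
Proof.
  unfold dpsi, ddpsi, psi. auto_derive.
  - split. apply psi_arg_pos. split; [|exact I]. generalize (psi_pos x); unfold psi; lra.
  - generalize (psi_pos x) (psi_sq x); unfold psi.
    set (s := sqrt (x * x + e * e)). intros H1 H2.
    assert (Hq : x * x + e * e <> 0) by (generalize (psi_arg_pos x); lra).
    assert (E : e * e = s * s - x * x) by lra. rewrite E. field. lra.
Qed.

Lemma dpsi_odd x : dpsi e (- x) = - dpsi e x.
Proof. unfold dpsi. rewrite psi_even. field. generalize (psi_pos x); lra. Qed.

Lemma psi_ge_e x : e <= psi e x.
Proof.
  generalize (psi_pos x) (psi_sq x). intros.
  destruct (Rle_or_lt e (psi e x)) as [|Hc]; auto.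
  assert (psi e x * psi e x < e * e) by (apply Rmult_le_0_lt_compat; lra). nra.
Qed.

Lemma ddpsi_le x : ddpsi e x <= / e.
Proof.
  unfold ddpsi. generalize (psi_ge_e x). intro H.
  assert (Hx : e * e <= x * x + e * e) by nra.
  assert (e * (e * e) <= psi e x * (x * x + e * e)).
  { apply Rmult_le_compat; nra. }
  assert (Hp : 0 < psi e x * (x * x + e * e)) by (apply Rmult_lt_0_compat; [apply psi_pos|apply psi_arg_pos]).
  apply (Rmult_le_reg_r (psi e x * (x * x + e * e))). exact Hp.
  unfold Rdiv. rewrite Rmult_assoc, Rinv_l by lra.
  apply (Rmult_le_reg_l e); auto. rewrite <- (Rmult_assoc e (/e)), Rinv_r by lra. lra.
Qed.

Lemma dpsi_lip x y : y <= x -> dpsi e x - dpsi e y <= (x - y) / e.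
Proof.
  intro Hyx. destruct (Req_dec y x) as [->|Hne].
  { replace (x - x) with 0 by ring. unfold Rdiv; rewrite Rmult_0_l; lra. }
  destruct (MVT_cor2 (dpsi e) (ddpsi e) y x) as [c [Hc _]]; [lra| |].
  { intros c _. apply is_derive_Reals, dpsi_derive. }
  rewrite Hc. generalize (ddpsi_le c). intro.
  unfold Rdiv. rewrite Rmult_comm. apply Rmult_le_compat_l; lra.
Qed.

Lemma psi_shift_Cn n a : Cn n (fun t => psi e (t + a)).
Proof.
  unfold psi. apply (Cn_sqrt n (fun t => (t + a) * (t + a) + e * e)).
  { intro; apply psi_arg_pos. }
  apply (Cn_plus n (fun t => (t + a) * (t + a)) (fun _ => e * e)); [|apply Cn_const].
  apply (Cn_mult n (fun t => t + a) (fun t => t + a));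
  apply (Cn_plus n (fun t => t) (fun _ => a)); (apply Cn_id || apply Cn_const).
Qed.

Definition mfun a t := (psi e (t - a) + psi e (t + a)) / 2.
Definition bump a t := mfun a t - psi e a.
Definition dbump a t := (dpsi e (t - a) + dpsi e (t + a)) / 2.

Lemma bump_derive a t : is_derive (bump a) t (dbump a t).
Proof.
  unfold bump, mfun, dbump, dpsi. generalize (psi_pos (t - a)) (psi_pos (t + a)).
  unfold psi. intros H1 H2. auto_derive.
  - repeat split; apply psi_arg_pos.
  - replace (t + - a) with (t - a) by ring. field. lra.
Qed.

Lemma bump_Cn n a : Cn n (bump a).
Proof.
  apply Cn_ext with (fun t => (fun _ => /2) t * psi e (t + - a) + ((fun _ => /2) t * psi e (t + a) + (fun _ => - psi e a) t)).
  { intro t. unfold bump, mfun. replace (t - a) with (t + - a) by ring. field. }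
  apply (Cn_plus n (fun t => /2 * psi e (t + - a))).
  apply (Cn_mult n (fun _ => /2) (fun t => psi e (t + - a))); [apply Cn_const| apply psi_shift_Cn].
  apply (Cn_plus n (fun t => /2 * psi e (t + a))); [|apply Cn_const].
  apply (Cn_mult n (fun _ => /2) (fun t => psi e (t + a))); [apply Cn_const| apply psi_shift_Cn].
Qed.

Lemma bump_even a t : bump a (- t) = bump a t.
Proof.
  unfold bump, mfun. replace (- t - a) with (- (t + a)) by ring.
  replace (- t + a) with (- (t - a)) by ring. rewrite !psi_even. field.
Qed.

Lemma bump_0 a : bump a 0 = 0.
Proof.
  unfold bump, mfun. replace (0 - a) with (- a) by ring. rewrite psi_even.
  replace (0 + a) with a by ring. field.
Qed.

Lemma bump_convex a : convex_fun (bump a).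
Proof.
  apply convex_ext with (fun t => (/2 * psi e (1 * t + - a) + /2 * psi e (1 * t + a)) + - psi e a).
  { intro t. unfold bump, mfun. replace (1 * t + - a) with (t - a) by ring.
    replace (1 * t) with t by ring. field. }
  apply convex_cst. apply convex_plus; apply convex_scal; try lra;
  apply convex_lin; apply psi_convex.
Qed.

Lemma bump_ge0 a t : 0 <= bump a t.
Proof.
  rewrite <- (bump_0 a). apply convex_ge0. apply bump_convex. intro; apply bump_even.
Qed.

Lemma bump_approx a t : 0 <= a -> Rabs (bump a t - (Rmax (Rabs t) a - a)) <= 2 * e.
Proof.
  intro Ha. unfold bump, mfun.
  generalize (psi_abs (t - a)) (psi_abs (t + a)) (psi_abs a). intros H1 H2 H3.
  rewrite (Rabs_right a) in H3 by lra.
  apply Rabs_le. revert H1 H2.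
  unfold Rmax. destruct (Rle_dec (Rabs t) a); unfold Rabs in *; repeat destruct Rcase_abs; intros; lra.
Qed.

Lemma dbump_bound a t : 0 <= t -> dbump a t <= t / e.
Proof.
  intro Ht. unfold dbump.
  replace (t - a) with (- (a - t)) by ring. rewrite dpsi_odd.
  generalize (dpsi_lip (t + a) (a - t) ltac:(lra)). intro H.
  replace (t + a - (a - t)) with (2 * t) in H by ring.
  unfold Rdiv in *. lra.
Qed.

Lemma dbump_ex_derive a t : ex_derive (dbump a) t.
Proof.
  unfold dbump. 
  apply ex_derive_ext with (fun t => (/2) * (dpsi e (t - a) + dpsi e (t + a))).
  { intro; simpl; field. }
  apply ex_derive_scal. apply (ex_derive_plus (fun t => dpsi e (t - a)) (fun t => dpsi e (t + a))).
  - apply (ex_derive_comp (dpsi e) (fun t => t - a)). eexists; apply dpsi_derive.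
    apply (ex_derive_minus (fun t => t) (fun _ => a)). apply ex_derive_id. apply ex_derive_const.
  - apply (ex_derive_comp (dpsi e) (fun t => t + a)). eexists; apply dpsi_derive.
    apply (ex_derive_plus (fun t => t) (fun _ => a)). apply ex_derive_id. apply ex_derive_const.
Qed.
End Psi.

Section ConvexG.
Variable g : R -> R.
Hypothesis Hc : convex_fun g.
Hypothesis Hev : even_fun g.
Hypothesis H0 : g 0 = 0.

Lemma g_nonneg x : 0 <= g x.
Proof. rewrite <- H0. apply convex_ge0; auto. Qed.

Lemma g_slope x y z : x < y < z -> (g y - g x) * (z - y) <= (g z - g y) * (y - x).
Proof.
  intros [Hxy Hyz].
  set (t := (z - y) / (z - x)).
  assert (Ht : 0 <= t <= 1).
  { unfold t; split. apply Rdiv_le_0_compat; lra.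
    apply (Rmult_le_reg_r (z - x)); [lra|]. unfold Rdiv; rewrite Rmult_assoc, Rinv_l; lra. }
  generalize (Hc x z t Ht). replace (t * x + (1 - t) * z) with y.
  2: { unfold t; field; lra. }
  intro H. apply (Rmult_le_compat_r (z - x)) in H; [|lra].
  assert (E1 : t * (z - x) = z - y) by (unfold t; field; lra).
  assert (E2 : (1 - t) * (z - x) = y - x) by (unfold t; field; lra).
  replace ((t * g x + (1 - t) * g z) * (z - x)) with (g x * (t * (z - x)) + g z * ((1 - t) * (z - x))) in H by ring.
  rewrite E1, E2 in H. nra.
Qed.

Lemma g_mono x y : 0 <= x <= y -> g x <= g y.
Proof.
  intros [Hx Hxy]. destruct (Req_dec y 0) as [->|Hy].
  { replace x with 0 by lra. lra. }
  set (t := (1 + x / y) / 2).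
  assert (Ht : 0 <= t <= 1).
  { unfold t. assert (0 <= x / y <= 1).
    { split. apply Rdiv_le_0_compat; lra.
      apply (Rmult_le_reg_r y); [lra|]. unfold Rdiv; rewrite Rmult_assoc, Rinv_l; lra. }
    lra. }
  generalize (Hc y (- y) t Ht). replace (t * y + (1 - t) * - y) with x.
  2: { unfold t; field; lra. }
  rewrite Hev. lra.
Qed.

Lemma g_lip x y M : 0 <= x <= y -> y <= M -> g y - g x <= g (M + 1) * (y - x).
Proof.
  intros Hxy HyM. destruct (Req_dec x y) as [->|Hne].
  { replace (y - y) with 0 by ring. lra. }
  generalize (g_slope x y (M + 1) ltac:(lra)) (g_mono x y Hxy) (g_nonneg y). intros H1 H2 H3.
  assert ((g y - g x) * 1 <= (g y - g x) * (M + 1 - y)) by (apply Rmult_le_compat_l; lra).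
  assert ((g (M + 1) - g y) * (y - x) <= g (M + 1) * (y - x)) by (apply Rmult_le_compat_r; lra).
  lra.
Qed.

Variable h : R.
Hypothesis Hh : 0 < h.

Definition ga (j : nat) := INR j * h.
Definition sig (j : nat) := (g (ga (S j)) - g (ga j)) / h.

Lemma ga_S j : ga (S j) = ga j + h.
Proof. unfold ga; rewrite S_INR; ring. Qed.

Lemma ga_nonneg j : 0 <= ga j.
Proof. unfold ga. apply Rmult_le_pos; [apply pos_INR| lra]. Qed.

Lemma ga_0 : ga 0 = 0.
Proof. unfold ga; simpl; ring. Qed.

Lemma ga_le i j : (i <= j)%nat -> ga i <= ga j.
Proof. intro; unfold ga. apply Rmult_le_compat_r; [lra| apply le_INR; auto]. Qed.

Lemma sig_nonneg j : 0 <= sig j.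
Proof.
  unfold sig. apply Rdiv_le_0_compat; [|lra].
  generalize (g_mono (ga j) (ga (S j))). rewrite ga_S. generalize (ga_nonneg j). intros Hn Hm. 
  assert (g (ga j) <= g (ga j + h)) by (apply Hm; lra). lra.
Qed.

Lemma sig_mono j : sig j <= sig (S j).
Proof.
  unfold sig. rewrite !ga_S.
  generalize (g_slope (ga j) (ga j + h) (ga j + h + h) ltac:(lra)).
  replace (ga j + h + h - (ga j + h)) with h by ring.
  replace (ga j + h - ga j) with h by ring. intro H.
  unfold Rdiv. apply Rmult_le_compat_r; [apply Rlt_le, Rinv_0_lt_compat; lra|].
  apply (Rmult_le_reg_r h); lra.
Qed.

Lemma sig_mono_le i j : (i <= j)%nat -> sig i <= sig j.
Proof. induction 1; [lra|]. generalize (sig_mono m); lra. Qed.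

Fixpoint Pf (N : nat) (t : R) : R :=
  match N with
  | O => sig 0 * (Rmax (Rabs t) (ga 0) - ga 0)
  | S n => Pf n t + (sig (S n) - sig n) * (Rmax (Rabs t) (ga (S n)) - ga (S n))
  end.

Lemma Pf_formula N : forall j t, 0 <= t -> (j <= N)%nat -> ga j <= t ->
  ((j < N)%nat -> t <= ga (S j)) -> Pf N t = g (ga j) + sig j * (t - ga j).
Proof.
  induction N; intros j t Ht HjN Hjt Hup.
  - assert (j = O) by lia. subst. simpl. rewrite ga_0, H0, Rabs_right by lra.
    rewrite Rmax_left by lra. ring.
  - simpl. rewrite Rabs_right by lra.
    destruct (Nat.eq_dec j (S N)) as [->|Hne].
    + rewrite (IHN N t Ht (le_n _)) by (auto; generalize (ga_le N (S N) ltac:(lia)); lra || lia).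
      rewrite Rmax_left by auto.
      set (G1 := g (ga (S N))). assert (E : sig N * h = G1 - g (ga N)) by (unfold G1, sig; field; lra).
      rewrite ga_S. nra.
    + assert (t <= ga (S j)) by (apply Hup; lia).
      assert (t <= ga (S N)) by (generalize (ga_le (S j) (S N) ltac:(lia)); lra).
      rewrite Rmax_right by auto.
      rewrite (IHN j t); auto; try ring; try lia.
Qed.
Lemma grid_find N t : 0 <= t <= ga (S N) -> exists j, (j <= N)%nat /\ ga j <= t <= ga (S j).
Proof.
  induction N; intro Ht.
  - exists O; split; auto. rewrite ga_0; lra.
  - destruct (Rle_or_lt t (ga (S N))).
    + destruct IHN as [j [Hj1 Hj2]]; [lra|]. exists j; split; auto.
    + exists (S N); split; auto; lra.
Qed.

Lemma Pf_err N t B : 0 <= t <= ga (S N) -> t <= B -> h <= 1 ->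
  Rabs (Pf N t - g t) <= g (B + 2) * h.
Proof.
  intros Ht HB Hh1. destruct (grid_find N t Ht) as [j [Hj [Hj1 Hj2]]].
  rewrite (Pf_formula N j t) by (auto; lra).
  generalize (sig_nonneg j) (ga_nonneg j) (ga_S j). intros Hs Hg Hgs.
  assert (Esig : sig j * h = g (ga (S j)) - g (ga j)) by (unfold sig; field; lra).
  assert (E1 : 0 <= sig j * (t - ga j) <= sig j * h).
  { split. apply Rmult_le_pos; lra. apply Rmult_le_compat_l; lra. }
  assert (M1 : g (ga j) <= g t) by (apply g_mono; lra).
  assert (M2 : g t <= g (ga (S j))) by (apply g_mono; lra).
  assert (L : g (ga (S j)) - g (ga j) <= g (B + 1 + 1) * (ga (S j) - ga j)).
  { apply g_lip; lra. }
  replace (B + 1 + 1) with (B + 2) in L by ring.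
  replace (ga (S j) - ga j) with h in L by lra.
  apply Rabs_le; lra.
Qed.

Variable e : R.
Hypothesis He : 0 < e.

Fixpoint Sf (N : nat) (t : R) : R :=
  match N with
  | O => sig 0 * bump e (ga 0) t
  | S n => Sf n t + (sig (S n) - sig n) * bump e (ga (S n)) t
  end.

Fixpoint dSf (N : nat) (t : R) : R :=
  match N with
  | O => sig 0 * dbump e (ga 0) t
  | S n => dSf n t + (sig (S n) - sig n) * dbump e (ga (S n)) t
  end.

Lemma Sf_P N t : Rabs (Sf N t - Pf N t) <= 2 * e * sig N.
Proof.
  induction N; simpl.
  - rewrite <- Rmult_minus_distr_l, Rabs_mult, Rabs_right by (apply Rle_ge, sig_nonneg).
    generalize (bump_approx e He (ga 0) t (ga_nonneg 0)) (sig_nonneg 0). intros. nra.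
  - generalize (bump_approx e He (ga (S N)) t (ga_nonneg _)) (sig_mono N). intros H1 H2.
    replace (Sf N t + (sig (S N) - sig N) * bump e (ga (S N)) t -
      (Pf N t + (sig (S N) - sig N) * (Rmax (Rabs t) (ga (S N)) - ga (S N)))) with
      ((Sf N t - Pf N t) + (sig (S N) - sig N) * (bump e (ga (S N)) t - (Rmax (Rabs t) (ga (S N)) - ga (S N)))) by ring.
    eapply Rle_trans; [apply Rabs_triang|]. rewrite Rabs_mult, (Rabs_right (sig (S N) - sig N)) by lra.
    assert ((sig (S N) - sig N) * Rabs (bump e (ga (S N)) t - (Rmax (Rabs t) (ga (S N)) - ga (S N))) <= (sig (S N) - sig N) * (2 * e)) by (apply Rmult_le_compat_l; lra).
    lra.
Qed.

Lemma Sf_Cn n N : Cn n (Sf N).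
Proof.
  induction N; simpl.
  - apply (Cn_mult n (fun _ => sig 0) (bump e (ga 0))); [apply Cn_const| apply bump_Cn; auto].
  - apply (Cn_plus n (Sf N)); auto.
    apply (Cn_mult n (fun _ => _) (bump e (ga (S N)))); [apply Cn_const| apply bump_Cn; auto].
Qed.

Lemma Sf_even N t : Sf N (- t) = Sf N t.
Proof. induction N; simpl; rewrite ?IHN, bump_even; auto. Qed.

Lemma Sf_0 N : Sf N 0 = 0.
Proof. induction N; simpl; rewrite ?IHN, bump_0; auto; ring. Qed.

Lemma Sf_convex N : convex_fun (Sf N).
Proof.
  induction N; simpl.
  - apply convex_scal. apply sig_nonneg. apply bump_convex; auto.
  - apply convex_plus; auto. apply convex_scal. generalize (sig_mono N); lra. apply bump_convex; auto.
Qed.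

Lemma Sf_ge0 N t : 0 <= Sf N t.
Proof. rewrite <- (Sf_0 N). apply convex_ge0. apply Sf_convex. intro; apply Sf_even. Qed.

Lemma Sf_derive N t : is_derive (Sf N) t (dSf N t).
Proof.
  induction N; simpl.
  - apply (is_derive_scal (bump e (ga 0))). apply bump_derive; auto.
  - apply (is_derive_plus (K:=R_AbsRing) (V:=R_NormedModule) (Sf N)); auto.
    apply (is_derive_scal (bump e (ga (S N)))). apply bump_derive; auto.
Qed.

Lemma dSf_bound N t : 0 <= t -> dSf N t <= sig N * (t / e).
Proof.
  intro Ht. induction N; simpl.
  - apply Rmult_le_compat_l. apply sig_nonneg. apply dbump_bound; auto.
  - generalize (sig_mono N) (dbump_bound e He (ga (S N)) t Ht). intros.
    assert ((sig (S N) - sig N) * dbump e (ga (S N)) t <= (sig (S N) - sig N) * (t / e)) by (apply Rmult_le_compat_l; lra).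
    lra.
Qed.

Lemma dSf_ex_derive N t : ex_derive (dSf N) t.
Proof.
  induction N; simpl.
  - apply (ex_derive_scal (dbump e (ga 0))). apply dbump_ex_derive; auto.
  - apply (ex_derive_plus (dSf N)); auto.
    apply (ex_derive_scal (dbump e (ga (S N)))). apply dbump_ex_derive; auto.
Qed.
End ConvexG.

Lemma Cn_comp n : forall f g, Cn n f -> Cn n g -> Cn n (fun x => f (g x)).
Proof.
  induction n; intros f g Hf Hg; [exact I|].
  pose proof (Cn_down _ _ Hg) as Hg'.
  destruct Hf as [F1 F2]; destruct Hg as [G1 G2]; split.
  - intro x; apply (ex_derive_comp f g x); auto.
  - apply Cn_ext with (fun x => Derive g x * Derive f (g x)).
    + intro; symmetry; apply Derive_comp; auto.
    + apply (Cn_mult n (Derive g) (fun x => Derive f (g x))); auto.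
Qed.

Lemma ex_derive_cont f x : ex_derive f x -> continuity_pt f x.
Proof.
  intro H. apply continuity_pt_filterlim.
  exact (ex_derive_continuous (K := R_AbsRing) (V := R_NormedModule) f x H).
Qed.

Lemma Rabs_def2b x y : Rabs x <= y -> - y <= x <= y.
Proof. unfold Rabs; destruct Rcase_abs; lra. Qed.

Section Main.
Variable chi : R -> R.
Hypothesis Hc : convex_fun chi.
Hypothesis Hev : even_fun chi.
Hypothesis H0 : chi 0 = 0.
Hypothesis Hsub : is_subgradient chi 1 1.

Lemma construct h e dl dl' N : 0 < h <= 1 -> 0 < e -> 0 < dl -> 0 < dl' <= 1/2 ->
  2 <= ga h (S N) ->
  2 * e * sig chi h N + chi 4 * h + 4 * dl <= dl' * dl' / 8 ->
  exists q f, 1 <= q /\ W_plus q f /\ smooth f /\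
    forall x, 2 * Rabs x <= ga h (S N) ->
      Rabs (f x - chi x) <= 2 * e * sig chi h N + chi (2 * Rabs x + 2) * h
         + 4 * dl * (x * x) + chi (2 * Rabs x + 1) * dl' * Rabs x.
Proof.
  intros Hh He Hdl Hdl' Hgrid Happ.
  set (T := fun u => Sf chi h e N u + dl * (u * u)).
  set (dT := fun u => dSf chi h e N u + dl * (2 * u)).
  assert (HTd : forall u, is_derive T u (dT u)).
  { intro u. unfold T, dT. apply (is_derive_plus (K:=R_AbsRing) (V:=R_NormedModule) (Sf chi h e N)).
    apply Sf_derive; auto.
    apply (is_derive_scal (fun u => u * u)). auto_derive; auto; ring. }
  assert (HTc : convex_fun T).
  { unfold T. apply convex_plus. apply Sf_convex; auto; lra. apply convex_scal; [lra|apply convex_sq]. }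
  assert (HTerr : forall u, 0 <= u <= 2 -> Rabs (T u - chi u) <= dl' * dl' / 8).
  { intros u Hu. unfold T.
    generalize (Sf_P chi Hc Hev h ltac:(lra) e He N u) (Pf_err chi Hc Hev H0 h ltac:(lra) N u 2 ltac:(lra) ltac:(lra) ltac:(lra)).
    intros E1 E2. replace (2 + 2) with 4 in E2 by ring.
    assert (0 <= u * u <= 4) by (split; nra).
    assert (0 <= dl * (u * u) <= 4 * dl) by (split; [apply Rmult_le_pos; lra| nra]).
    apply Rabs_le. apply Rabs_def2b in E1. apply Rabs_def2b in E2. lra. }
  set (m := fun l => l * dT l - 1).
  assert (Hmc : continuity m).
  { intro l. apply ex_derive_cont. unfold m.
    apply (ex_derive_minus (fun l => l * dT l) (fun _ => 1)); [|apply ex_derive_const].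
    apply (ex_derive_mult (fun l => l) dT). apply ex_derive_id.
    unfold dT. apply (ex_derive_plus (dSf chi h e N)). apply dSf_ex_derive; auto.
    apply (ex_derive_scal (fun u => 2 * u)). apply (ex_derive_scal (fun u => u)). apply ex_derive_id. }
  set (eta := dl' * dl' / 8).
  assert (Hm1 : m (1 - dl') < 0).
  { set (x0 := 1 - dl').
    generalize (convex_support T x0 (dT x0) HTc (HTd x0) 1). intro S1.
    generalize (HTerr 1 ltac:(lra)) (HTerr x0 ltac:(unfold x0; lra)) (Hsub x0). intros E1 E2 E3.
    apply Rabs_def2b in E1; apply Rabs_def2b in E2.
    replace (1 - x0) with dl' in S1 by (unfold x0; ring).
    assert (dT x0 * dl' <= dl' + dl' * dl' / 4) by (unfold x0 in *; lra).
    assert (dT x0 <= 1 + dl' / 4).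
    { apply (Rmult_le_reg_r dl'); lra. }
    unfold m. assert (0 < x0) by (unfold x0; lra).
    assert (x0 * dT x0 <= x0 * (1 + dl' / 4)) by (apply Rmult_le_compat_l; lra).
    unfold x0 in *. nra. }
  assert (Hm2 : 0 < m (1 + dl')).
  { set (x1 := 1 + dl').
    generalize (convex_support T x1 (dT x1) HTc (HTd x1) 1). intro S1.
    generalize (HTerr 1 ltac:(lra)) (HTerr x1 ltac:(unfold x1; lra)) (Hsub x1). intros E1 E2 E3.
    apply Rabs_def2b in E1; apply Rabs_def2b in E2.
    replace (1 - x1) with (- dl') in S1 by (unfold x1; ring).
    assert (dl' - dl' * dl' / 4 <= dT x1 * dl') by (unfold x1 in *; lra).
    assert (1 - dl' / 4 <= dT x1).
    { apply (Rmult_le_reg_r dl'); lra. }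
    unfold m. assert (0 < x1) by (unfold x1; lra).
    assert (x1 * (1 - dl' / 4) <= x1 * dT x1) by (apply Rmult_le_compat_l; lra).
    unfold x1 in *. nra. }
  destruct (IVT m (1 - dl') (1 + dl') Hmc ltac:(lra) Hm1 Hm2) as [lam [Hlam Hmlam]].
  unfold m in Hmlam.
  set (f := fun x => T (lam * x)).
  assert (Hfd : forall x, is_derive f x (lam * dT (lam * x))).
  { intro x. unfold f.
    assert (D1 : is_derive (fun y => lam * y) x lam) by (auto_derive; auto; ring).
    exact (is_derive_comp (K:=R_AbsRing) (V:=R_NormedModule) T (fun y => lam * y) x _ _ (HTd (lam * x)) D1). }
  assert (Hsig : 0 <= sig chi h N) by (apply sig_nonneg; auto; lra).
  assert (HSf0 : forall u, 0 <= Sf chi h e N u) by (intro; apply Sf_ge0; auto; lra).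
  assert (Hlam0 : 0 < lam) by lra.
  exists (sig chi h N / (e * dl) + 2), f.
  assert (Hq0 : 0 <= sig chi h N / (e * dl)).
  { apply Rdiv_le_0_compat; auto. apply Rmult_lt_0_compat; auto. }
  split; [lra|]. split; [split; [repeat split|] | split].
  - intro x. unfold f, T. apply Rplus_le_le_0_compat; auto.
    apply Rmult_le_pos; [lra| nra].
  - apply convex_ext with (fun x => T (lam * x + 0)).
    { intro; unfold f; f_equal; ring. }
    apply convex_lin; auto.
  - intro x. unfold f, T. replace (lam * - x) with (- (lam * x)) by ring.
    rewrite Sf_even. f_equal. ring.
  - apply derive_lsc. intro x. exists (lam * dT (lam * x)). apply Hfd.
  - unfold f, T. rewrite Rmult_0_r, Sf_0. ring.
  - intro y. assert (Hfc : convex_fun f).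
    { apply convex_ext with (fun x => T (lam * x + 0)).
      { intro; unfold f; f_equal; ring. }
      apply convex_lin; auto. }
    generalize (convex_support f 1 _ Hfc (Hfd 1) y).
    rewrite Rmult_1_r. replace (lam * dT lam) with 1 by lra. lra.
  - intros l s Hl Hs.
    generalize (subgrad_le_derive f l s _ Hs (Hfd l)). intro Hsl.
    set (u := lam * l). assert (Hu : 0 < u) by (unfold u; apply Rmult_lt_0_compat; lra).
    assert (E1 : l * s <= u * dT u) by (unfold u; nra).
    generalize (dSf_bound chi Hc Hev h ltac:(lra) e He N u ltac:(lra)). intro B1.
    assert (E2 : u * dSf chi h e N u <= sig chi h N / (e * dl) * (dl * (u * u))).
    { replace (sig chi h N / (e * dl) * (dl * (u * u))) with (u * (sig chi h N * (u / e))) by (field; lra).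
      apply Rmult_le_compat_l; lra. }
    assert (E3 : sig chi h N / (e * dl) * (dl * (u * u)) + 2 * (dl * (u * u)) <=
                 (sig chi h N / (e * dl) + 2) * f l).
    { unfold f, T. fold u. generalize (HSf0 u). intro. 
      assert (0 <= (sig chi h N / (e * dl) + 2) * Sf chi h e N u) by (apply Rmult_le_pos; lra).
      lra. }
    unfold dT in E1. lra.
  - apply Cn_smooth. intro n. unfold f.
    apply (Cn_comp n T (fun x => lam * x)).
    + unfold T. apply (Cn_plus n (Sf chi h e N)). apply Sf_Cn; auto.
      apply (Cn_mult n (fun _ => dl) (fun u => u * u)). apply Cn_const.
      apply (Cn_mult n (fun u => u) (fun u => u)); apply Cn_id.
    + apply (Cn_mult n (fun _ => lam) (fun u => u)). apply Cn_const. apply Cn_id.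
  - intros x Hx.
    assert (Ef : f x = f (Rabs x)).
    { unfold Rabs; destruct Rcase_abs; auto. unfold f, T.
      replace (lam * - x) with (- (lam * x)) by ring. rewrite Sf_even. f_equal. ring. }
    assert (Ec : chi x = chi (Rabs x)).
    { unfold Rabs; destruct Rcase_abs; [|reflexivity]. symmetry; apply Hev. }
    assert (Ex : x * x = Rabs x * Rabs x) by (rewrite <- Rabs_mult; symmetry; apply Rabs_right; nra).
    rewrite Ef, Ec, Ex. set (r := Rabs x) in *. assert (Hr : 0 <= r) by apply Rabs_pos.
    set (u := lam * r).
    assert (Hu : 0 <= u <= 2 * r) by (unfold u; split; nra).
    generalize (Sf_P chi Hc Hev h ltac:(lra) e He N u)
      (Pf_err chi Hc Hev H0 h ltac:(lra) N u (2 * r) ltac:(lra) ltac:(lra) ltac:(lra)).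
    intros E1 E2. apply Rabs_def2b in E1. apply Rabs_def2b in E2.
    assert (E3 : 0 <= dl * (u * u) <= 4 * dl * (r * r)).
    { split. apply Rmult_le_pos; nra.
      assert (u * u <= 4 * (r * r)) by nra. nra. }
    assert (E4 : Rabs (chi u - chi r) <= chi (2 * r + 1) * dl' * r).
    { assert (Hc1 : 0 <= chi (2 * r + 1)) by (apply g_nonneg; auto).
      destruct (Rle_or_lt 1 lam).
      - assert (r <= u) by (unfold u; nra).
        generalize (g_lip chi Hc Hev H0 r u (2 * r) ltac:(lra) ltac:(lra))
          (g_mono chi Hc Hev r u ltac:(lra)). intros L1 L2.
        assert (chi (2 * r + 1) * (u - r) <= chi (2 * r + 1) * (dl' * r)).
        { apply Rmult_le_compat_l; auto. unfold u; nra. }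
        apply Rabs_le. lra.
      - assert (u <= r) by (unfold u; nra).
        generalize (g_lip chi Hc Hev H0 u r (2 * r) ltac:(lra) ltac:(lra))
          (g_mono chi Hc Hev u r ltac:(lra)). intros L1 L2.
        assert (chi (2 * r + 1) * (r - u) <= chi (2 * r + 1) * (dl' * r)).
        { apply Rmult_le_compat_l; auto. unfold u; nra. }
        apply Rabs_le. lra. }
    apply Rabs_def2b in E4. unfold f, T. fold u. apply Rabs_le. lra.
Qed.
End Main.

Lemma nat_above x : exists n : nat, x < INR n.
Proof.
  destruct (archimed x) as [H1 _].
  destruct (Z_lt_le_dec 0 (up x)) as [Hp|Hn].
  - exists (Z.to_nat (up x)). rewrite INR_IZR_INZ, Z2Nat.id by lia. lra.
  - exists O. simpl. apply IZR_le in Hn. lra.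
Qed.

Section Final.
Variable chi : R -> R.
Hypothesis Hc : convex_fun chi.
Hypothesis Hev : even_fun chi.
Hypothesis H0 : chi 0 = 0.
Hypothesis Hsub : is_subgradient chi 1 1.

Definition Dr (r : R) := 1 + chi (2 * r + 2) + 4 * (r * r) + chi (2 * r + 1) * r.

Lemma step (k : nat) : exists qf : R * (R -> R), 1 <= fst qf /\ W_plus (fst qf) (snd qf) /\
  smooth (snd qf) /\ forall x, Rabs x <= INR k -> Rabs (snd qf x - chi x) <= Dr (Rabs x) / (INR k + 2).
Proof.
  set (K := INR k + 2).
  assert (HK : 2 <= K) by (unfold K; generalize (pos_INR k); lra).
  set (C := chi 4). assert (HC : 0 <= C) by (apply g_nonneg; auto).
  set (dl' := / K). set (dl := / (64 * (K * K))).
  set (h := / (32 * (K * K) * (C + 1))).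
  assert (Hh : 0 < h) by (unfold h; apply Rinv_0_lt_compat; nra).
  destruct (nat_above ((2 * K) / h)) as [N HN].
  set (sg := sig chi h N). assert (Hsg : 0 <= sg) by (apply sig_nonneg; auto).
  set (e := / (64 * (K * K) * (sg + 1))).
  assert (He : 0 < e) by (unfold e; apply Rinv_0_lt_compat; nra).
  assert (Hdl : 0 < dl) by (unfold dl; apply Rinv_0_lt_compat; nra).
  assert (Hdl' : 0 < dl' <= 1/2).
  { unfold dl'. split. apply Rinv_0_lt_compat; lra.
    apply (Rmult_le_reg_l K); [lra|]. rewrite Rinv_r by lra. lra. }
  assert (Hh1 : h <= / K).
  { unfold h. apply Rinv_le_contravar; [lra|]. nra. }
  assert (Hgrid : 2 * K <= ga h (S N)).
  { unfold ga. rewrite S_INR.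
    assert (2 * K / h * h = 2 * K) by (field; lra).
    assert (2 * K / h * h <= INR N * h) by (apply Rmult_le_compat_r; lra). nra. }
  assert (E1 : 2 * e * sg <= / (32 * (K * K))).
  { unfold e. replace (2 * / (64 * (K * K) * (sg + 1)) * sg) with ((sg / (sg + 1)) * / (32 * (K * K))) by (field; nra).
    rewrite <- (Rmult_1_l (/ (32 * (K*K)))) at 2. apply Rmult_le_compat_r. apply Rlt_le, Rinv_0_lt_compat; nra.
    apply (Rmult_le_reg_r (sg+1)); [lra|]. unfold Rdiv; rewrite Rmult_assoc, Rinv_l; lra. }
  assert (E2 : C * h <= / (32 * (K * K))).
  { unfold h. replace (C * / (32 * (K * K) * (C + 1))) with ((C / (C + 1)) * / (32 * (K * K))) by (field; nra).
    rewrite <- (Rmult_1_l (/ (32 * (K*K)))) at 2. apply Rmult_le_compat_r. apply Rlt_le, Rinv_0_lt_compat; nra.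
    apply (Rmult_le_reg_r (C+1)); [lra|]. unfold Rdiv; rewrite Rmult_assoc, Rinv_l; lra. }
  assert (Happ : 2 * e * sig chi h N + chi 4 * h + 4 * dl <= dl' * dl' / 8).
  { fold sg C. unfold dl, dl'. replace (/ K * / K / 8) with (/ (32 * (K * K)) + / (32 * (K * K)) + 4 * / (64 * (K * K))) by (field; lra).
    lra. }
  destruct (construct chi Hc Hev H0 Hsub h e dl dl' N ltac:(split; [lra| unfold dl' in Hdl'; lra]) He Hdl Hdl' ltac:(lra) Happ)
    as [q [f [Hq [HW [Hs Herr]]]]].
  exists (q, f). simpl. split; auto. split; auto. split; auto.
  intros x Hx.
  assert (Hx2 : 2 * Rabs x <= ga h (S N)) by (unfold K in *; lra).
  generalize (Herr x Hx2). intro B.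
  set (r := Rabs x) in *. assert (Hr : 0 <= r) by apply Rabs_pos.
  assert (Ex : x * x = r * r) by (unfold r; rewrite <- Rabs_mult; symmetry; apply Rabs_right; nra).
  rewrite Ex in B. fold sg in B.
  assert (c1 : 0 <= chi (2 * r + 2)) by (apply g_nonneg; auto).
  assert (c2 : 0 <= chi (2 * r + 1) * r) by (apply Rmult_le_pos; auto; apply g_nonneg; auto).
  assert (iK : 0 < / K) by (apply Rinv_0_lt_compat; lra).
  assert (F1 : 2 * e * sg <= / K).
  { eapply Rle_trans; [apply E1|]. apply Rinv_le_contravar; nra. }
  assert (F2 : chi (2 * r + 2) * h <= chi (2 * r + 2) * / K) by (apply Rmult_le_compat_l; auto).
  assert (F3 : 4 * dl * (r * r) <= 4 * (r * r) * / K).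
  { assert (dl <= / K) by (unfold dl; apply Rinv_le_contravar; nra).
    assert (0 <= r * r) by nra. nra. }
  assert (F4 : chi (2 * r + 1) * dl' * r = chi (2 * r + 1) * r * / K) by (unfold dl'; ring).
  unfold Dr. unfold Rdiv. fold K. nra.
Qed.
End Final.

Theorem proposition1p7 (p : R) (chi : R -> R) :
  1 <= p -> W_plus p chi ->
  exists (pk : nat -> R) (chik : nat -> R -> R),
    (forall k, 1 <= pk k) /\
    (forall k, W_plus (pk k) (chik k)) /\
    (forall k, smooth (chik k)) /\
    cvg_unif_compact chik chi.
Proof.
  intros Hp [[Hnn [Hc [Hev [Hlsc [H0 Hsub]]]]] Hgr].
  set (F := fun k => proj1_sig (constructive_indefinite_description _ (step chi Hc Hev H0 Hsub k))).
  assert (HF : forall k, _) by (intro k; exact (proj2_sig (constructive_indefinite_description _ (step chi Hc Hev H0 Hsub k)))).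
  exists (fun k => fst (F k)), (fun k => snd (F k)).
  split; [intro k; apply (HF k)|]. split; [intro k; apply (HF k)|]. split; [intro k; apply (HF k)|].
  intros a b eps Heps.
  set (r0 := Rmax (Rabs a) (Rabs b)).
  assert (Hr0 : 0 <= r0) by (unfold r0; generalize (Rabs_pos a) (Rmax_l (Rabs a) (Rabs b)); lra).
  set (D0 := Dr chi r0).
  destruct (nat_above (r0 + D0 / eps)) as [N HN].
  exists N. intros k Hk x Hx.
  assert (HkN : INR N <= INR k) by (apply le_INR; auto).
  assert (Hxr : Rabs x <= r0).
  { unfold r0. unfold Rmax; destruct Rle_dec; unfold Rabs in *; repeat destruct Rcase_abs; lra. }
  assert (HD0 : 0 <= D0 / eps).
  { apply Rdiv_le_0_compat; auto. unfold D0, Dr.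
    generalize (g_nonneg chi Hc Hev H0 (2 * r0 + 2)) (g_nonneg chi Hc Hev H0 (2 * r0 + 1)). nra. }
  destruct (HF k) as [_ [_ [_ B]]]. fold (F k) in B.
  generalize (B x ltac:(lra)). intro B1.
  assert (Hmono : Dr chi (Rabs x) <= D0).
  { unfold D0, Dr. set (s := Rabs x) in *. assert (0 <= s) by apply Rabs_pos.
    generalize (g_mono chi Hc Hev (2 * s + 2) (2 * r0 + 2) ltac:(lra))
      (g_mono chi Hc Hev (2 * s + 1) (2 * r0 + 1) ltac:(lra))
      (g_nonneg chi Hc Hev H0 (2 * s + 1)). intros. 
    assert (4 * (s * s) <= 4 * (r0 * r0)) by nra.
    assert (chi (2 * s + 1) * s <= chi (2 * r0 + 1) * r0).
    { apply Rmult_le_compat; lra. }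
    lra. }
  assert (HK : 0 < INR k + 2) by (generalize (pos_INR k); lra).
  assert (D0 < eps * (INR k + 2)).
  { assert (D0 / eps < INR k + 2) by lra.
    apply (Rmult_lt_compat_l eps) in H; auto. unfold Rdiv in H.
    replace (eps * (D0 * / eps)) with D0 in H by (field; lra). lra. }
  eapply Rle_lt_trans; [apply B1|].
  apply (Rmult_lt_reg_r (INR k + 2)); auto. unfold Rdiv. rewrite Rmult_assoc, Rinv_l by lra. nra.
Qed.
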